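(* Consider the TeeRollup protocol described in the context, and let $st_h$ be the latest state recorded by the TeeRollup smart contract (TSC). If a malicious sequencer with a compromised TEE forges an invalid state $st_{h+1}'$ with transaction list $txs_{h+1}'$, i.e. $st_{h+1}'$ is not the state obtained by executing $txs_{h+1}'$ on the initial state $st_h$, then the TSC will not accept $st_{h+1}'$.
   Context: TeeRollup is a rollup protocol on a main chain with finality and smart contracts. There are $n$ sequencers $p_1,\dots,p_n$, each equipped with a TEE enclave $\eta_i$ holding a key pair $(pk_i,sk_i)$ whose public keys are registered on-chain; at most $f$ of these TEEs are compromised (for a compromised TEE the adversary knows $sk_i$ and can sign arbitrary messages), and the remaining TEEs are uncompromised. Malicious sequencers fully control the inputs and outputs of their enclaves (they may choose inputs, delay, drop or replay messages). Rollup states form a chain: a state at height $h$ is $st_h = \langle h, H(st_{h-1}), R_h, H(txs_h)\rangle$, where $H$ is a secure (collision-resistant) hash function, $R_h$ is the Merkle root of the account tree (addresses and balances) and $txs_h$ is the batch of transactions executed to produce $st_h$; the state transition is $st_{h+1} \leftarrow execute(st_h, txs_{h+1})$. An uncompromised enclave, given an input state $s$ and a batch $txs$, runs the fixed protocol program: it outputs the state $execute(s,txs)$, whose previous-hash field is $H(s)$, and signs (with $sk_i$) only states produced this way. A quorum certificate (QC) for a state is a set of valid signatures on its hash from at least $f+1$ distinct registered sequencers. The TSC records the latest accepted state $st_h$ and accepts a submitted state $S$ only if $S$ has height $h+1$, the previous-hash field of $S$ equals $H(st_h)$, and $S$ comes with a valid QC. *)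

(* Defs.v *)
From mathcomp Require Import all_boot.
Set Implicit Arguments. Unset Strict Implicit. Unset Printing Implicit Defensive.

(* A rollup state  st_h = < h, H(st_{h-1}), R_h, H(txs_h) >.
   Digest = type of hash values, Root = type of Merkle roots. *)
Record RState (Digest Root : Type) := MkRState {
  st_height : nat;
  st_prev   : Digest;
  st_root   : Root;
  st_txs    : Digest
}.

Definition QC (n : nat) (Sig : Type) := seq ('I_n * Sig).

Definition qc_signers (n : nat) (PK Digest Sig : Type)
    (pk : 'I_n -> PK) (verify : PK -> Digest -> Sig -> bool)
    (m : Digest) (qc : QC n Sig) : {set 'I_n} :=
  [set i | has (fun p : 'I_n * Sig => (p.1 == i) && verify (pk i) m p.2) qc].

Definition valid_QC (n f : nat) (PK Digest Sig : Type)
    (pk : 'I_n -> PK) (verify : PK -> Digest -> Sig -> bool)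
    (m : Digest) (qc : QC n Sig) : Prop :=
  f.+1 <= #|qc_signers pk verify m qc|.

Definition tsc_accepts (n f : nat) (PK Digest Root Sig : Type)
    (pk : 'I_n -> PK) (verify : PK -> Digest -> Sig -> bool)
    (H : RState Digest Root -> Digest)
    (st S : RState Digest Root) (qc : QC n Sig) : Prop :=
  st_height S = (st_height st).+1 /\
  st_prev S = H st /\
  valid_QC f pk verify (H S) qc.

(* Main.v *)
Require Import Defs.
From mathcomp Require Import all_boot.

Lemma has_ex (T : Type) (a : pred T) (s : seq T) : has a s -> exists x, a x.
Proof. elim: s => //= x s IH /orP [h|h]; [by exists x | exact: IH]. Qed.

Theorem lemma2
  (n f : nat) (Digest Root Tx PK Sig : Type)
  (* hash functions on states and on transaction batches; collision resistance *)
  (H : RState Digest Root -> Digest) (Htx : seq Tx -> Digest)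
  (H_cr : injective H) (Htx_cr : injective Htx)
  (* deterministic state transition *)
  (execute : RState Digest Root -> seq Tx -> RState Digest Root)
  (exec_prev : forall s txs, st_prev (execute s txs) = H s)
  (exec_txs  : forall s txs, st_txs (execute s txs) = Htx txs)
  (* registered public keys and signature verification *)
  (pk : 'I_n -> PK) (verify : PK -> Digest -> Sig -> bool)
  (* compromised TEEs: at most f *)
  (C : {set 'I_n}) (hC : #|C| <= f)
  (* messages actually signed by each enclave *)
  (enclave_signed : 'I_n -> Digest -> Prop)
  (* an uncompromised enclave only signs (hashes of) states it produced by
     executing the protocol program on some input state and batch *)
  (honest_enclave : forall i m, i \notin C -> enclave_signed i m ->
      exists s txs, m = H (execute s txs))
  (* the key of an uncompromised enclave is secret: every valid signature
     under pk_i was produced by enclave i *)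
  (unforgeable : forall i m sg, i \notin C -> verify (pk i) m sg ->
      enclave_signed i m)
  (* latest state recorded by the TSC, forged state and its batch *)
  (st_h st' : RState Digest Root) (txs' : seq Tx)
  (h_batch : st_txs st' = Htx txs')
  (h_invalid : st' <> execute st_h txs') :
  forall qc : QC n Sig, ~ tsc_accepts f pk verify H st_h st' qc.
Proof.
move=> qc [hh [hp hq]].
rewrite /valid_QC in hq.
have nsub : ~~ (qc_signers pk verify (H st') qc \subset C).
  apply/negP => hs; move: (subset_leq_card hs) => hle.
  have := leq_trans hq (leq_trans hle hC); by rewrite ltnn.
have [i hi hiC] := subsetPn nsub.
move: hi; rewrite inE; case/has_ex => -[j sg] /= /andP [/eqP hj hv].
have := honest_enclave _ _ hiC (unforgeable _ _ _ hiC hv) => -[s [txs hs]].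
have := hiC; move=> _.
have E := H_cr _ _ hs.
have hs2 : s = st_h by apply: H_cr; rewrite -(exec_prev s txs) -E hp.
have ht : txs = txs' by apply: Htx_cr; rewrite -(exec_txs s txs) -E h_batch.
by apply: h_invalid; rewrite E hs2 ht.
Qed.
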